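(* Let $d>2$ be a prime such that $-1\in QNR_d$ and $2\in QNR_d$. Then the equation $$d=\left(\frac{k}{2j}\right)^2\frac{m^2-e^2}{em}$$ has no solutions $k,j,m,e\in\mathbb{N}$ with $\gcd(m,e)=1$ and $m>e>0$.
   Context: For an odd prime $d$, $QR_d$ is the set of nonzero quadratic residues modulo $d$ in $\{1,\dots,d-1\}$, and $QNR_d=\{1,\dots,d-1\}\setminus QR_d$ is the set of quadratic nonresidues modulo $d$ (residues taken mod $d$). *)

(* Defs.v *)
From HB Require Import structures.
From mathcomp Require Import all_boot all_order all_algebra.
Set Implicit Arguments. Unset Strict Implicit. Unset Printing Implicit Defensive.

Definition QR (d : nat) : pred nat :=
  fun a => [&& 0 < a, a < d & [exists x : 'I_d, (x * x) %% d == a]].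

Definition QNR (d : nat) : pred nat :=
  fun a => [&& 0 < a, a < d & ~~ QR d a].

(* Main.v *)
Require Import Defs.
From mathcomp Require Import all_boot all_order all_algebra zify ring.

Lemma copr_of a b : (forall g, g %| a -> g %| b -> g %| 1) -> coprime a b.
Proof. move=> H; rewrite /coprime -dvdn1; apply: H; [exact: dvdn_gcdl | exact: dvdn_gcdr]. Qed.

Lemma L1 x y z : coprime x y -> x * y = z * z -> exists u, x = u * u.
Proof.
move=> cxy h; exists (gcdn x z); apply/eqP; rewrite eqn_dvd; apply/andP; split.
  have -> := muln_gcdr (gcdn x z) x z.
  have -> := muln_gcdl x z x. have -> := muln_gcdl x z z.
  rewrite !dvdn_gcd -h; apply/and3P; split; first apply/andP; try split;
    by [apply: dvdn_mulr | apply: dvdn_mull].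
have cg : coprime (gcdn x z * gcdn x z) y.
  by rewrite coprimeMl andbb; apply: coprime_dvdl cxy; apply: dvdn_gcdl.
rewrite -(Gauss_dvdl _ cg) h; apply: dvdn_mul; apply: dvdn_gcdr.
Qed.

Lemma L0 X s t : 0 < s -> X * (s * s) = t * t -> exists u, X = u * u.
Proof.
move=> s0 h.
have [s' def_s] := dvdnP (dvdn_gcdl s t); set g := gcdn s t in def_s.
have [t' def_t] := dvdnP (dvdn_gcdr s t); rewrite -/g in def_t.
have g0 : 0 < g by rewrite gcdn_gt0 s0.
have cst : coprime s' t'.
  by rewrite /coprime -(eqn_pmul2r g0) mul1n muln_gcdl -def_s -def_t.
have h' : X * (s' * s') = t' * t'.
  apply/eqP; rewrite -(eqn_pmul2r (_ : 0 < g * g)); last by rewrite muln_gt0 g0; apply/eqP.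
  move: h; rewrite def_s def_t; nia.
have c2 : coprime (s' * s') (t' * t') by rewrite coprimeMl !coprimeMr cst.
have d2 : s' * s' %| t' * t' by rewrite -h' dvdn_mull.
have : s' * s' = 1.
  by move: c2; rewrite /coprime; move/eqP <-; apply/esym/gcdn_idPl.
by move=> e1; exists t'; rewrite -h' e1 muln1.
Qed.
Lemma sqmod d c x y : prime d -> ~~ (d %| y) -> x*x = c*(y*y) %[mod d] ->
  exists z : 'I_d, z*z %% d = c %% d.
Proof.
move=> pd ndy hx.
have d0 : 0 < d by apply: prime_gt0.
have [a _ ha] := Bezoutl y d0.
have cy : gcdn d y = 1 by apply/eqP; rewrite -/(coprime d y) prime_coprime.
rewrite cy in ha.
set w := a * y in ha.
have hw : w * w = 1 %[mod d].
  apply/eqP; rewrite -(eqn_modDr w); apply/eqP.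
  have -> : w * w + w = (1 + w) * w by ring.
  have := ha; rewrite /dvdn => /eqP h0.
  by rewrite -modnMml h0 mul0n mod0n.
exists (Ordinal (ltn_pmod (x * a) d0)) => /=.
rewrite modnMm.
have -> : x * a * (x * a) = (x * x) * (a * a) by ring.
rewrite -modnMml hx modnMml.
have -> : c * (y * y) * (a * a) = c * (w * w) by rewrite /w; ring.
by rewrite -modnMmr hw modnMmr muln1.
Qed.
Lemma even_split p q : p <= q -> odd p = odd q -> exists r, q = p + 2 * r.
Proof.
move=> le hp; exists (q - p)./2.
have : odd (q - p) = false by rewrite oddB // hp addbb.
move=> ho; have := odd_double_half (q - p); rewrite ho -muln2 /=. lia.
Qed.

Lemma pyth X Y b : X*X + Y*Y = b*b -> coprime X Y -> odd X -> 0 < Y ->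
  exists M E, [/\ coprime M E, 0 < E, E < M, X = M*M - E*E & (Y = 2*(M*E) /\ b = M*M + E*E)].
Proof.
move=> h cXY oX Y0.
have eY : ~~ odd Y.
  apply/negP => oY. have /negbTE hb : ~~ odd b.
    by apply/negP => ob; move: (congr1 odd h); rewrite oddD !oddM oX oY ob.
  move: h. rewrite -(odd_double_half X) -(odd_double_half Y) -(odd_double_half b) oX oY hb.
  rewrite -!muln2. timeout 20 nia.
have [y ey] : exists y, Y = 2 * y.
  by have [r ->] := @even_split 0 Y (leq0n Y) (esym (negbTE eY)); exists r.
have ob : odd b.
  by move: (congr1 odd h); rewrite oddD !oddM oX (negbTE eY) /= => /esym/andP[].
have Xb : X <= b by timeout 20 nia.
have [v ev] := @even_split X b Xb (etrans oX (esym ob)).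
set u := X + v.
have uv : u * v = y * y by rewrite /u; timeout 20 nia.
have cXYY : coprime X (Y * Y) by rewrite coprimeMr cXY.
have cuv : coprime u v.
  apply: copr_of => g gu gv.
  have gX : g %| X by have := dvdn_sub gu gv; rewrite /u addnK.
  have gb : g %| b.
    by rewrite ev (_ : X + 2 * v = u + v) ?dvdn_add // /u; lia.
  have gYY : g %| Y * Y.
    have -> : Y * Y = b * b - X * X by lia.
    by apply: dvdn_sub; apply: dvdn_mulr.
  by rewrite -(eqnP cXYY) dvdn_gcd gX gYY.
have [M eM] := L1 _ _ _ cuv uv.
have [E eE] := L1 _ _ _ (etrans (esym (coprime_sym u v)) cuv) (etrans (mulnC v u) uv).
have yME : y = M * E.
  apply/eqP; rewrite -eqn_sqr; apply/eqP; rewrite !expnS !expn0 !muln1.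
  rewrite -uv eM eE; ring.
have cME : coprime M E.
  apply: (@coprime_dvdl _ u); first by rewrite eM dvdn_mulr.
  by apply: (@coprime_dvdr _ v); first by rewrite eE dvdn_mulr.
have X0 : 0 < X by case: X oX {h cXY Xb ev u uv cuv eM cXYY}.
exists M, E; split => //.
- by rewrite lt0n; apply/negP => /eqP E0; move: yME; rewrite E0 muln0 => y0; move: Y0; rewrite ey y0.
- rewrite ltnNge; apply/negP => ME; have := leq_mul ME ME; move: eM eE; rewrite /u; lia.
- by rewrite -eM -eE /u; lia.
- split; first by rewrite ey yME.
  by rewrite -eM -eE /u; lia.
Qed.

Lemma sq4 a b c w z : coprime a b -> coprime a c -> coprime a w -> coprime b c ->
  coprime b w -> coprime c w -> a*b*c*w = z*z ->
  [/\ (exists x, a = x*x), (exists x, b = x*x), (exists x, c = x*x) & (exists x, w = x*x)].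
Proof.
move=> cab cac caw cbc cbw ccw h; split.
- apply: (L1 _ (b*c*w) z); first by rewrite !coprimeMr cab cac caw.
  by rewrite -h; lia.
- apply: (L1 _ (a*c*w) z); first by rewrite !coprimeMr (coprime_sym b a) cab cbc cbw.
  by rewrite -h; lia.
- apply: (L1 _ (a*b*w) z); first by rewrite !coprimeMr (coprime_sym c a) (coprime_sym c b) cac cbc ccw.
  by rewrite -h; lia.
- apply: (L1 _ (a*b*c) z); first by rewrite !coprimeMr (coprime_sym w a) (coprime_sym w b) (coprime_sym w c) caw cbw ccw.
  by rewrite -h; lia.
Qed.

Lemma sq4d1 d a b c w z : prime d -> coprime a b -> coprime a c -> coprime a w -> coprime b c ->
  coprime b w -> coprime c w -> d %| a -> d*(a*b*c*w) = z*z ->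
  [/\ (exists x, a = d*(x*x)), (exists x, b = x*x), (exists x, c = x*x) & (exists x, w = x*x)].
Proof.
move=> pd cab cac caw cbc cbw ccw da h.
have d0 : 0 < d by apply: prime_gt0.
have dzz : d %| z * z by rewrite -h dvdn_mulr.
have dz : d %| z by move: dzz; rewrite Euclid_dvdM // orbb.
have [z1 ez] := dvdnP dz. have [a1 ea] := dvdnP da.
have h1 : a1*b*c*w = z1*z1.
  apply/eqP; rewrite -(eqn_pmul2l (_ : 0 < d*d)); last by rewrite muln_gt0 d0.
  apply/eqP; move: h; rewrite ez ea => h; lia.
have a1a : a1 %| a by rewrite ea dvdn_mulr.
have [[x ex] ? ? ?] := sq4 _ _ _ _ _ (coprime_dvdl a1a cab) (coprime_dvdl a1a cac) (coprime_dvdl a1a caw) cbc cbw ccw h1.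
split => //; exists x; by rewrite ea ex mulnC.
Qed.

Lemma sqr_dvd d x : prime d -> d %| x * x -> d %| x.
Proof. by move=> pd; rewrite Euclid_dvdM // orbb. Qed.

Lemma ar1 m e : e <= m -> 2 * e = (m + e) - (m - e). Proof. lia. Qed.
Lemma ar2 m e : e <= m -> 2 * m = (m - e) + (m + e). Proof. lia. Qed.

Lemma descent d (pd : prime d)
  (nA : ~ exists z : 'I_d, z*z %% d = (d-1) %% d)
  (nB : ~ exists z : 'I_d, z*z %% d = 2 %% d) n :
  forall m e z, m < n -> coprime m e -> 0 < e -> e < m ->
  d * (e * m * (m - e) * (m + e)) = z * z -> False.
Proof.
have d0 : 0 < d by apply: prime_gt0.
have d1 : 1 < d by apply: prime_gt1.
elim: n => // n IH m e z mn cme e0 em hz.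
have hcop : d %| m -> d %| e -> False.
  move=> dm de; have : d %| gcdn m e by rewrite dvdn_gcd dm de.
  by rewrite (eqnP cme) dvdn1 => /eqP d1'; move: d1; rewrite d1'.
case: (boolP (odd m && odd e)) => [/andP[om oe] | npar].
  have [e' he'] := @even_split e m (ltnW em) (etrans oe (esym om)).
  set m' := e + e'.
  have e'0 : 0 < e' by lia.
  have cm' : coprime m' e'.
    apply: copr_of => g gm ge.
    have gm0 : g %| m.
      by rewrite he' (_ : e + 2 * e' = m' + e'); [apply: dvdn_add | rewrite /m'; lia].
    have ge0 : g %| e by have := dvdn_sub gm ge; rewrite /m' addnK.
    by rewrite -(eqnP cme) dvdn_gcd gm0 ge0.
  have hX : d * (e' * m' * (m' - e') * (m' + e')) * (2 * 2) = z * z.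
    rewrite -hz (_ : m' - e' = e) /m'; last lia.
    rewrite (_ : e + e' + e' = m); last lia.
    rewrite (_ : m - e = 2 * e'); last lia.
    rewrite (_ : m + e = 2 * (e + e')); last lia.
    lia.
  have [u hu] := L0 _ _ _ (isT : 0 < 2) hX.
  by apply: (IH m' e' u) => //; rewrite /m'; lia.
have oD : odd (m + e).
  rewrite oddD; move: npar; case om: (odd m); case oe: (odd e) => //= _.
  have : 2 %| gcdn m e by rewrite dvdn_gcd !dvdn2 om oe.
  by rewrite (eqnP cme).
have oC : odd (m - e) by rewrite oddB ?(ltnW em) // -oddD.
have c1 : coprime e m by rewrite coprime_sym.
have c2 : coprime e (m - e).
  apply: copr_of => g ge gC.
  have gm : g %| m by rewrite -(subnK (ltnW em)); apply: dvdn_add.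
  by rewrite -(eqnP cme) dvdn_gcd gm ge.
have c3 : coprime e (m + e).
  apply: copr_of => g ge gD.
  have gm : g %| m by rewrite -(dvdn_addl m ge).
  by rewrite -(eqnP cme) dvdn_gcd gm ge.
have c4 : coprime m (m - e).
  apply: copr_of => g gm gC.
  have ge : g %| e by have := dvdn_sub gm gC; rewrite subKn ?(ltnW em).
  by rewrite -(eqnP cme) dvdn_gcd gm ge.
have c5 : coprime m (m + e).
  apply: copr_of => g gm gD.
  have ge : g %| e by rewrite -(dvdn_addr e gm).
  by rewrite -(eqnP cme) dvdn_gcd gm ge.
have c6 : coprime (m - e) (m + e).
  apply: copr_of => g gC gD.
  have g2m : g %| 2 * m.
    by rewrite (ar2 _ _ (ltnW em)); apply: dvdn_add.
  have g2e : g %| 2 * e.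
    by rewrite (ar1 _ _ (ltnW em)); apply: dvdn_sub.
  have : g %| gcdn (2 * m) (2 * e) by rewrite dvdn_gcd g2m g2e.
  have <- := muln_gcdr 2 m e; rewrite (eqnP cme) => g2.
  have cg2 : coprime g 2 by apply: (coprime_dvdl gD); rewrite coprimen2.
  by rewrite -(Gauss_dvdr 1 cg2) muln1.
have dP : d %| e * m * (m - e) * (m + e).
  have dzz : d %| z * z by rewrite -hz dvdn_mulr.
  have [z1 ez] := dvdnP (sqr_dvd _ _ pd dzz).
  apply/dvdnP; exists (z1 * z1); apply/eqP; rewrite -(eqn_pmul2l d0); apply/eqP.
  rewrite hz ez; ring.
rewrite !Euclid_dvdM // in dP.
case/orP: dP => [/orP[/orP[de|dm]|dC]|dD].
- (* d | e : descent *)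
  have [[a ea] [b eb] [c ec] [f ef]] :=
    sq4d1 _ _ _ _ _ _ pd c1 c2 c3 c4 c5 c6 de hz.
  clear hz.
  have oc : odd c by move: oC; rewrite ec oddM andbb.
  have ofd : odd f by move: oD; rewrite ef oddM andbb.
  have cf : coprime c f.
    apply: (coprime_dvdl (dvdn_mulr c (dvdnn c))).
    by apply: (coprime_dvdr (dvdn_mulr f (dvdnn f))); rewrite -ec -ef.
  have ccff : c * c < f * f by rewrite -ec -ef; lia.
  have cle : c <= f.
    rewrite leqNgt; apply/negP => fc; have := leq_mul (ltnW fc) (ltnW fc); lia.
  have [Y eY] := @even_split c f cle (etrans oc (esym ofd)).
  set X := c + Y.
  have s1 : c * c + f * f = 2 * (b * b) by rewrite -ec -ef -eb; lia.
  have s2 : f * f = c * c + 2 * e by rewrite -ec -ef; lia.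
  have hXY : X * X + Y * Y = b * b by move: s1; rewrite /X eY; lia.
  have h2 : 2 * (X * Y) = d * (a * a) by move: s2; rewrite -ea /X eY; lia.
  have fXY : f = X + Y by rewrite eY /X; lia.
  have cXY : coprime X Y.
    apply: copr_of => g gX gY.
    have gc : g %| c by have := dvdn_sub gX gY; rewrite /X addnK.
    have gf : g %| f by rewrite fXY dvdn_add.
    by rewrite -(eqnP cf) dvdn_gcd gc gf.
  have Y0 : 0 < Y.
    rewrite lt0n; apply/negP => /eqP Y0; move: h2; rewrite Y0 muln0 -ea => e00.
    by move: e0; rewrite -e00.
  have fin : forall M E, coprime M E -> 0 < E -> E < M -> b = M * M + E * E ->
      (M * M - E * E) * (2 * (M * E)) = X * Y -> False.
    move=> M E cME E0 EM ebb hPQ.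
    have hsq : (M - E) * (M + E) = M * M - E * E.
      by rewrite -subn_sqr !expnS !expn0 !muln1.
    have hX : d * (E * M * (M - E) * (M + E)) * (2 * 2) = (d * a) * (d * a).
      rewrite (_ : E * M * (M - E) * (M + E) = E * M * ((M - E) * (M + E))); last by ring.
      rewrite hsq.
      rewrite (_ : d * (E * M * (M * M - E * E)) * (2 * 2) =
                   d * (2 * ((M * M - E * E) * (2 * (M * E))))); last by ring.
      by rewrite hPQ h2; ring.
    have [u hu] := L0 _ _ _ (isT : 0 < 2) hX.
    have M0 : 0 < M by apply: leq_ltn_trans EM.
    have hM : M <= M * M by apply: leq_pmulr.
    have hE : 0 < E * E by rewrite muln_gt0 E0.
    have b0 : 0 < b by rewrite ebb; lia.
    have hb : b <= b * b by apply: leq_pmulr.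
    apply: (IH M E u) => //.
    by move: mn; rewrite eb; lia.
  case oX : (odd X).
    have [M [E [cME E0 EM eX [eY' eb']]]] := pyth _ _ _ hXY cXY oX Y0.
    by apply: (fin M E) => //; rewrite -eX -eY'.
  have oY : odd Y by move: ofd; rewrite fXY oddD oX.
  have X0 : 0 < X by rewrite /X; lia.
  have hYX : Y * Y + X * X = b * b by rewrite addnC.
  have [M [E [cME E0 EM eX [eY' eb']]]] := pyth _ _ _ hYX (etrans (coprime_sym _ _) cXY) oY X0.
  by apply: (fin M E) => //; rewrite -eX -eY' mulnC.
-
  have hz' : d * (m * e * (m - e) * (m + e)) = z * z by rewrite -hz; ring.
  have [[b eb] [a ea] [c ec] [f ef]] :=
    sq4d1 _ _ _ _ _ _ pd cme c4 c5 c2 c3 c6 dm hz'.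
  clear hz hz'.
  have ndc : ~~ (d %| c).
    apply/negP => dc; apply: hcop => //.
    rewrite (_ : e = m - (m - e)); last by rewrite subKn // ltnW.
    by apply: dvdn_sub => //; rewrite ec dvdn_mulr.
  have s1 : f * f + c * c = (2 * (b * b)) * d.
    by rewrite -ef -ec (_ : 2 * (b * b) * d = 2 * m); [lia | rewrite eb; ring].
  have cong : f * f = (d - 1) * (c * c) %[mod d].
    apply/eqP; rewrite -(eqn_modDr (c * c)) s1.
    have -> : (d - 1) * (c * c) + c * c = (c * c) * d.
      by rewrite mulnBl mul1n subnK ?leq_pmull // mulnC.
    by rewrite !modnMl.
  by apply: nA; apply: (sqmod _ _ _ _ pd ndc cong).
-
  have hz' : d * ((m - e) * e * m * (m + e)) = z * z by rewrite -hz; ring.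
  have [[c ec] [a ea] [b eb] [f ef]] :=
    sq4d1 _ _ _ _ _ _ pd (etrans (coprime_sym _ _) c2) (etrans (coprime_sym _ _) c4) c6 c1 c3 c5 dC hz'.
  clear hz hz'.
  have s1 : f * f + d * (c * c) = 2 * (b * b) by rewrite -ef -ec -eb; lia.
  have ndb : ~~ (d %| b).
    apply/negP => db.
    have dm : d %| m by rewrite eb dvdn_mulr.
    have dff : d %| f * f.
      rewrite -(@dvdn_addl (d * (c * c)) d (f * f)) ?s1; last by apply: dvdn_mulr.
      by apply: dvdn_mull; apply: dvdn_mulr.
    apply: hcop => //; by rewrite -(dvdn_addr e dm) ef.
  have cong : f * f = 2 * (b * b) %[mod d].
    by rewrite -(modnMDl (c * c) (f * f) d) -s1 mulnC addnC.
  by apply: nB; apply: (sqmod _ _ _ _ pd ndb cong).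
-
  have hz' : d * ((m + e) * e * m * (m - e)) = z * z by rewrite -hz; ring.
  have [[f ef] [a ea] [b eb] [c ec]] :=
    sq4d1 _ _ _ _ _ _ pd (etrans (coprime_sym _ _) c3) (etrans (coprime_sym _ _) c5)
      (etrans (coprime_sym _ _) c6) c1 c2 c4 dD hz'.
  clear hz hz'.
  have s1 : b * b + a * a = (f * f) * d by rewrite -eb -ea mulnC -ef.
  have nda : ~~ (d %| a).
    apply/negP => da.
    have de : d %| e by rewrite ea dvdn_mulr.
    have dbb : d %| b * b.
      rewrite -(@dvdn_addl (a * a) d (b * b)) ?s1; last by apply: dvdn_mulr.
      by apply: dvdn_mull.
    by apply: hcop => //; rewrite eb dvdn_mulr // sqr_dvd.
  have cong : b * b = (d - 1) * (a * a) %[mod d].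
    apply/eqP; rewrite -(eqn_modDr (a * a)) s1.
    have -> : (d - 1) * (a * a) + a * a = (a * a) * d.
      by rewrite mulnBl mul1n subnK ?leq_pmull // mulnC.
    by rewrite !modnMl.
  by apply: nA; apply: (sqmod _ _ _ _ pd nda cong).
Qed.
Import GRing.Theory Num.Theory.
Local Open Scope ring_scope.

Theorem lemma11 (d : nat) (hd : prime d) (hd2 : (2 < d)%N)
    (hm1 : ((d - 1) %% d)%N \in QNR d) (h2 : (2 %% d)%N \in QNR d) :
  ~ exists k j m e : nat,
      [/\ coprime m e, (0 < e)%N, (e < m)%N &
        (d%:R : rat) = (k%:R / (2 * j%:R)) ^+ 2 * ((m%:R ^+ 2 - e%:R ^+ 2) / (e%:R * m%:R))].
Proof.
have nA : ~ exists z : 'I_d, (z * z %% d = (d - 1) %% d)%N.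
  move=> [z hz]; move: hm1; rewrite unfold_in /QNR /QR => /and3P[p1 p2 /negP]; apply.
  by apply/and3P; split => //; apply/existsP; exists z; apply/eqP.
have nB : ~ exists z : 'I_d, (z * z %% d = 2 %% d)%N.
  move=> [z hz]; move: h2; rewrite unfold_in /QNR /QR => /and3P[p1 p2 /negP]; apply.
  by apply/and3P; split => //; apply/existsP; exists z; apply/eqP.
move=> [k [j [m [e [cme e0 em H]]]]].
have dr : (d%:R : rat) != 0 by rewrite pnatr_eq0 -lt0n (ltn_trans _ hd2).
have [j0 | jpos] := posnP j.
  by move: H dr; rewrite j0 mulr0 invr0 mulr0 expr0n /= mul0r => ->; rewrite eqxx.
have jr : (j%:R : rat) != 0 by rewrite pnatr_eq0 -lt0n.
have er : (e%:R : rat) != 0 by rewrite pnatr_eq0 -lt0n.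
have mr : (m%:R : rat) != 0 by rewrite pnatr_eq0 -lt0n (ltn_trans e0 em).
have H2 : (d%:R : rat) * ((2 * j%:R) ^+ 2 * (e%:R * m%:R)) = k%:R ^+ 2 * (m%:R ^+ 2 - e%:R ^+ 2).
  by rewrite H; field; rewrite mr er jr.
have H3 : (d * ((2 * j) * (2 * j)) * (e * m) = k * k * (m * m - e * e))%N.
  have le : (e * e <= m * m)%N by apply: leq_mul; apply: ltnW.
  apply/eqP; rewrite -(eqr_nat rat) !natrM (natrB _ le) !natrM.
  by apply/eqP; move: H2; rewrite !expr2 => <-; ring.
have hsq : ((m - e) * (m + e) = m * m - e * e)%N.
  by rewrite -subn_sqr !expnS !expn0 !muln1.
have hX : (d * (e * m * (m - e) * (m + e)) * ((2 * j) * (2 * j)) =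
           (k * (m * m - e * e)) * (k * (m * m - e * e)))%N.
  rewrite (_ : (e * m * (m - e) * (m + e) = e * m * ((m - e) * (m + e)))%N); last by ring.
  rewrite hsq.
  rewrite (_ : (k * (m * m - e * e) * (k * (m * m - e * e)) =
               k * k * (m * m - e * e) * (m * m - e * e))%N); last by ring.
  rewrite -H3; ring.
have j2 : (0 < 2 * j)%N by rewrite muln_gt0 jpos.
have [u hu] := L0 _ _ _ j2 hX.
exact: (descent _ hd nA nB m.+1 m e u (ltnSn m) cme e0 em hu).
Qed.
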